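(* For all $n\ge0$, $r_1,r_2\in(-1,1)$ and $-1<q\le1$, \[ \sum_{s=0}^{n}\genfrac{[}{]}{0pt}{}{n}{s}_{q}r_{1}^{n-s}r_{2}^{s}\frac{(r_{1}^{2})_{s}(r_{1}r_{2})_{s}}{(r_{1}^{2}r_{2}^{2})_{s}}=\frac{w_{n}(0,r_{1},r_{2},q)}{(r_{1}^{2}r_{2}^{2})_{n}}=\phi_{n}(r_{1},r_{2},q). \]
   Context: Notation: $(a)_n=\prod_{j=0}^{n-1}(1-aq^j)$, $(a)_0=1$; $[n]_q=1+\dots+q^{n-1}$, $[0]_q=0$, $[n]_q!=\prod_{j=1}^n[j]_q$, $[0]_q!=1$; $\genfrac{[}{]}{0pt}{}{n}{k}_q=\frac{[n]_q!}{[n-k]_q![k]_q!}$ for $0\le k\le n$, else $0$. $w_n(m,r_1,r_2,q)=\sum_{s=0}^n\genfrac{[}{]}{0pt}{}{n}{s}_q r_1^s(q^mr_2^2)_s\,r_2^{n-s}(q^mr_1^2)_{n-s}$, $\phi_n(r_1,r_2,q)=w_n(0,r_1,r_2,q)/(r_1^2r_2^2)_n$. *)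

(* Defs.v *)
(* the identity is algebraic; stated over any real field. *)
From HB Require Import structures.
From mathcomp Require Import all_boot all_order all_algebra.
Set Implicit Arguments. Unset Strict Implicit. Unset Printing Implicit Defensive.
Import Order.TTheory GRing.Theory Num.Theory.
Local Open Scope ring_scope.

Section QDefs.
Variable R : fieldType.

Definition qpoch (q a : R) (n : nat) : R := \prod_(j < n) (1 - a * q ^+ j).

Definition qint (q : R) (n : nat) : R := \sum_(j < n) q ^+ j.

Definition qfact (q : R) (n : nat) : R := \prod_(1 <= j < n.+1) qint q j.

Definition qbinom (q : R) (n k : nat) : R :=
  if (k <= n)%N then qfact q n / (qfact q (n - k) * qfact q k) else 0.

Definition w_n (n m : nat) (r1 r2 q : R) : R :=
  \sum_(0 <= s < n.+1)
    qbinom q n s * r1 ^+ s * qpoch q (q ^+ m * r2 ^+ 2) s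
      * r2 ^+ (n - s) * qpoch q (q ^+ m * r1 ^+ 2) (n - s).

Definition phi_n (n : nat) (r1 r2 q : R) : R :=
  w_n n 0 r1 r2 q / qpoch q (r1 ^+ 2 * r2 ^+ 2) n.

End QDefs.

(* Main.v *)
Require Import Defs.
From HB Require Import structures.
From mathcomp Require Import all_boot all_order all_algebra.
From mathcomp Require Import zify ring lra.
Import Order.TTheory GRing.Theory Num.Theory.
Local Open Scope ring_scope.

Section Alg.
Variable R : fieldType.
Variable q : R.
Hypothesis Hf : forall m, qfact q m != 0.

Lemma lc2 (A1 B1 A2 B2 L M c1 c2 : R) : A1 = B1 -> A2 = B2 ->
  L - M = c1 * (A1 - B1) + c2 * (A2 - B2) -> L = M.
Proof. move=> -> -> h; apply/eqP; rewrite -subr_eq0 h !subrr !mulr0 addr0. by []. Qed.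

Lemma lc3 (A1 B1 A2 B2 A3 B3 L M c1 c2 c3 : R) : A1 = B1 -> A2 = B2 -> A3 = B3 ->
  L - M = c1 * (A1 - B1) + c2 * (A2 - B2) + c3 * (A3 - B3) -> L = M.
Proof. move=> -> -> -> h; apply/eqP; rewrite -subr_eq0 h !subrr !mulr0 !addr0. by []. Qed.

Lemma qpochS a s : qpoch q a s.+1 = qpoch q a s * (1 - a * q ^+ s).
Proof. by rewrite /qpoch big_ord_recr. Qed.

Lemma qpochSl a s : qpoch q a s.+1 = (1 - a) * qpoch q (a * q) s.
Proof.
rewrite /qpoch big_ord_recl expr0 mulr1; congr (_ * _).
by apply: eq_bigr => i _; rewrite lift0 exprS mulrA.
Qed.

Lemma qpochD a s m : qpoch q a (s + m) = qpoch q a s * qpoch q (a * q ^+ s) m.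
Proof.
rewrite /qpoch big_split_ord; congr (_ * _).
by apply: eq_bigr => i _; rewrite /= exprD mulrA.
Qed.

Lemma qpoch0 a : qpoch q a 0 = 1.
Proof. by rewrite /qpoch big_ord0. Qed.

Lemma qfactS m : qfact q m.+1 = qfact q m * qint q m.+1.
Proof. by rewrite /qfact big_nat_recr. Qed.

Lemma qfact0 : qfact q 0 = 1.
Proof. by rewrite /qfact big_geq. Qed.

Lemma qintD a b : qint q (a + b) = qint q a + q ^+ a * qint q b.
Proof.
rewrite /qint big_split_ord mulr_sumr; congr (_ + _).
by apply: eq_bigr => i _; rewrite /= exprD.
Qed.

Lemma qint_neq0 j : qint q j.+1 != 0.
Proof. by move: (Hf j.+1); rewrite qfactS mulf_eq0 negb_or => /andP[]. Qed.

Lemma bin_n0 n : qbinom q n 0 = 1.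
Proof. by rewrite /qbinom leq0n subn0 qfact0 mulr1 divff. Qed.

Lemma bin_nn n : qbinom q n n = 1.
Proof. by rewrite /qbinom leqnn subnn qfact0 mul1r divff. Qed.

Lemma bin_out n k : (n < k)%N -> qbinom q n k = 0.
Proof. by rewrite /qbinom ltnNge => /negbTE ->. Qed.

Lemma pascal2 n k : qbinom q n.+1 k.+1 = qbinom q n k.+1 + q ^+ (n - k) * qbinom q n k.
Proof.
case: (ltngtP k n) => hk.
- have [m ->] : exists m, n = (k + m).+1 by exists (n - k.+1)%N; lia.
  rewrite /qbinom.
  have -> : (k.+1 <= (k + m).+2)%N = true by lia.
  have -> : (k.+1 <= (k + m).+1)%N = true by lia.
  have -> : (k <= (k + m).+1)%N = true by lia.
  have -> : ((k + m).+2 - k.+1 = m.+1)%N by lia.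
  have -> : ((k + m).+1 - k.+1 = m)%N by lia.
  have -> : ((k + m).+1 - k = m.+1)%N by lia.
  rewrite [qfact q (k + m).+2]qfactS [qfact q m.+1]qfactS [qfact q k.+1]qfactS.
  have -> : qint q (k + m).+2 = qint q m.+1 + q ^+ m.+1 * qint q k.+1.
    by rewrite -qintD; congr qint; lia.
  field.
  by rewrite ?qint_neq0 ?Hf.
- rewrite !bin_out ?mulr0 ?addr0 //; lia.
- by rewrite hk bin_nn subnn expr0 mul1r bin_nn bin_out ?add0r.
Qed.

Lemma pascal1 n k : qbinom q n.+1 k.+1 = qbinom q n k + q ^+ k.+1 * qbinom q n k.+1.
Proof.
case: (ltngtP k n) => hk.
- have [m ->] : exists m, n = (k + m).+1 by exists (n - k.+1)%N; lia.
  rewrite /qbinom.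
  have -> : (k.+1 <= (k + m).+2)%N = true by lia.
  have -> : (k.+1 <= (k + m).+1)%N = true by lia.
  have -> : (k <= (k + m).+1)%N = true by lia.
  have -> : ((k + m).+2 - k.+1 = m.+1)%N by lia.
  have -> : ((k + m).+1 - k.+1 = m)%N by lia.
  have -> : ((k + m).+1 - k = m.+1)%N by lia.
  rewrite [qfact q (k + m).+2]qfactS [qfact q m.+1]qfactS [qfact q k.+1]qfactS.
  have -> : qint q (k + m).+2 = qint q k.+1 + q ^+ k.+1 * qint q m.+1.
    by rewrite -qintD; congr qint; lia.
  field.
  by rewrite ?qint_neq0 ?Hf.
- rewrite !bin_out ?mulr0 ?addr0 //; lia.
- by rewrite hk bin_nn (@bin_out n n.+1 (ltnSn n)) mulr0 addr0 bin_nn.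
Qed.


Definition TP n s (a b g u v : R) :=
  u ^+ (n - s) * v ^+ s * qpoch q a s * qpoch q b s * qpoch q (g * q ^+ s) (n - s).
Definition P n (a b g u v : R) := \sum_(s < n.+1) qbinom q n s * TP n s a b g u v.
Definition TQ n s (x y u v : R) :=
  u ^+ s * qpoch q x s * v ^+ (n - s) * qpoch q y (n - s).
Definition Q n (x y u v : R) := \sum_(s < n.+1) qbinom q n s * TQ n s x y u v.

Lemma P_rec n (a b g u v : R) : P n.+1 a b g u v =
  u * (1 - g * q ^+ n) * P n a b g u v
  + v * (1 - a) * (1 - b) * P n (a * q) (b * q) (g * q) (u * q) v.
Proof.
rewrite /P big_ord_recl /=.
under eq_bigr => i _ do rewrite /bump /= add1n pascal2 mulrDl.
rewrite big_split /= addrA.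
have -> : qbinom q n.+1 0 * TP n.+1 0 a b g u v
   + \sum_(i < n.+1) qbinom q n i.+1 * TP n.+1 i.+1 a b g u v
   = \sum_(i < n.+2) qbinom q n i * TP n.+1 i a b g u v.
  by rewrite [RHS]big_ord_recl !bin_n0.
rewrite big_ord_recr /= bin_out // mul0r addr0.
rewrite !mulr_sumr; congr (_ + _); apply: eq_bigr => [[i /= hi]] _.
- rewrite /TP subSn // qpochS.
  have -> : g * q ^+ i * q ^+ (n - i) = g * q ^+ n by rewrite -mulrA -exprD subnKC.
  rewrite exprS; ring.
- rewrite /TP subSS !qpochSl exprS exprMn.
  have -> : g * q ^+ i.+1 = g * q * q ^+ i by rewrite exprS mulrA.
  ring.
Qed.

Lemma Q_rec n (x y u v : R) : Q n.+1 x y u v =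
  u * (1 - x) * Q n (x * q) y u v + v * (1 - y) * Q n x (y * q) (u * q) v.
Proof.
rewrite /Q big_ord_recl /=.
under eq_bigr => i _ do rewrite /bump /= add1n pascal1 mulrDl.
rewrite big_split /= addrCA.
have -> : qbinom q n.+1 0 * TQ n.+1 0 x y u v
   + \sum_(i < n.+1) q ^+ i.+1 * qbinom q n i.+1 * TQ n.+1 i.+1 x y u v
   = \sum_(i < n.+2) q ^+ i * qbinom q n i * TQ n.+1 i x y u v.
  by rewrite [RHS]big_ord_recl !bin_n0 expr0 !mul1r.
rewrite [\sum_(i < n.+2) _]big_ord_recr /= bin_out // mulr0 mul0r addr0.
rewrite !mulr_sumr; congr (_ + _); apply: eq_bigr => [[i /= hi]] _.
- rewrite /TQ subSS qpochSl exprS; ring.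
- rewrite /TQ subSn // qpochSl exprS exprMn; ring.
Qed.

Lemma Q_contig n (x y u v : R) :
  (1 - x) * Q n (x * q) y u v + x * (1 - y) * Q n x (y * q) (u * q) v
  = (1 - x * y * q ^+ n) * Q n x y u v.
Proof.
rewrite /Q !mulr_sumr -big_split; apply: eq_bigr => [[s /= hs]] _.
rewrite /TQ exprMn.
have h1 := qpochSl x s; rewrite qpochS in h1.
have h2 := qpochSl y (n - s); rewrite qpochS in h2.
have h3 : q ^+ s * q ^+ (n - s) = q ^+ n by rewrite -exprD subnKC.
set K := qbinom q n s * u ^+ s * v ^+ (n - s).
apply: (@lc3 _ _ _ _ _ _ _ _ (- K * qpoch q y (n - s)) (- K * x * q ^+ s * qpoch q x s)
   (- K * x * y * qpoch q x s * qpoch q y (n - s)) h1 h2 h3).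
rewrite /K; ring.
Qed.

Lemma PQ n : forall a b x u v : R, b * v = x * u -> P n a b (a * x) u v = Q n x a u v.
Proof.
elim: n => [|n IH] a b x u v h.
  by rewrite /P /Q !big_ord1 /TP /TQ !qpoch0 !bin_n0 !expr0 !mul1r.
rewrite P_rec Q_rec.
have -> : a * x * q = a * q * x by ring.
rewrite IH // IH; last first.
  have -> : b * q * v = (b * v) * q by ring.
  by rewrite h; ring.
have hc := Q_contig n x a u v.
apply: (@lc2 _ _ _ _ _ _ (- u) (- (1 - a) * Q n x (a * q) (u * q) v) hc h).
ring.
Qed.
End Alg.

Section Pos.
Variable R : realFieldType.

Lemma qint_neq0R (q : R) j : -1 < q <= 1 -> qint q j.+1 != 0.
Proof.
case/andP=> hq1 hq2.
have [->|hq] := eqVneq q 1.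
  rewrite /qint; under eq_bigr => i _ do rewrite expr1n.
  by rewrite sumr_const card_ord pnatr_eq0.
have hlt : q < 1 by rewrite lt_neqAle hq hq2.
have hn : `|q| < 1 by rewrite ltr_norml hq1 hlt.
apply/negP => /eqP h0.
have := subrX1 q j.+1; rewrite -/(qint q j.+1) h0 mulr0 => /eqP.
rewrite subr_eq0 => /eqP hX.
have : `|q ^+ j.+1| < 1 by rewrite normrX exprn_ilt1.
by rewrite hX normr1 ltxx.
Qed.

Lemma qfact_neq0R (q : R) m : -1 < q <= 1 -> qfact q m != 0.
Proof.
move=> hq; elim: m => [|m IH]; first by rewrite qfact0 oner_neq0.
by rewrite qfactS mulf_neq0 // qint_neq0R.
Qed.

Lemma qpoch_neq0R (q c : R) k : `|c| < 1 -> -1 < q <= 1 -> qpoch q c k != 0.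
Proof.
move=> hc /andP[hq1 hq2].
have hqn : `|q| <= 1 by rewrite ler_norml hq2 ltW.
apply/prodf_neq0 => j _.
rewrite subr_eq0 eq_sym lt_eqF //; apply: ltr_normlW.
rewrite normrM normrX.
apply: (le_lt_trans _ hc).
rewrite -[X in _ <= X]mulr1 ler_wpM2l //.
by rewrite exprn_ile1.
Qed.

End Pos.

Theorem mainTheorem7 (R : realFieldType) (n : nat) (r1 r2 q : R) :
  -1 < r1 < 1 -> -1 < r2 < 1 -> -1 < q <= 1 ->
  (\sum_(0 <= s < n.+1)
     qbinom q n s * r1 ^+ (n - s) * r2 ^+ s
       * (qpoch q (r1 ^+ 2) s * qpoch q (r1 * r2) s
          / qpoch q (r1 ^+ 2 * r2 ^+ 2) s)
   = w_n n 0 r1 r2 q / qpoch q (r1 ^+ 2 * r2 ^+ 2) n)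
  /\ w_n n 0 r1 r2 q / qpoch q (r1 ^+ 2 * r2 ^+ 2) n = phi_n n r1 r2 q.
Proof.
move=> h1 h2 hq; split; last by [].
have n1 : `|r1| < 1 by rewrite ltr_norml.
have n2 : `|r2| < 1 by rewrite ltr_norml.
have hc : `|r1 ^+ 2 * r2 ^+ 2| < 1.
  rewrite normrM !normrX.
  have a1 : `|r1| ^+ 2 < 1 by rewrite exprn_ilt1.
  have a2 : `|r2| ^+ 2 <= 1 by rewrite exprn_ile1 // ltW.
  apply: (le_lt_trans _ a1).
  by rewrite -[X in _ <= X]mulr1; apply: ler_wpM2l; rewrite ?exprn_ge0.
have Cnz k : qpoch q (r1 ^+ 2 * r2 ^+ 2) k != 0 by apply: qpoch_neq0R.
have Hf m : qfact q m != 0 by apply: qfact_neq0R.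
have e1 : w_n n 0 r1 r2 q = Q _ q n (r2 ^+ 2) (r1 ^+ 2) r1 r2.
  rewrite /w_n /Q big_mkord; apply: eq_bigr => s _.
  by rewrite /TQ expr0 !mul1r !mulrA.
have e2 := @PQ _ q Hf n (r1 ^+ 2) (r1 * r2) (r2 ^+ 2) r1 r2.
rewrite e1 -e2; last by ring.
apply: (mulIf (Cnz n)); rewrite divfK //.
rewrite /P big_mkord mulr_suml; apply: eq_bigr => [[s /= hs]] _.
have -> : qpoch q (r1 ^+ 2 * r2 ^+ 2) n =
    qpoch q (r1 ^+ 2 * r2 ^+ 2) s * qpoch q (r1 ^+ 2 * r2 ^+ 2 * q ^+ s) (n - s).
  by rewrite -qpochD subnKC.
rewrite /TP.
field.
exact: Cnz.
Qed.
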